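(* Let $\mathcal{LS}_{\mathfrak{A}_1}\langle X\rangle$ be the free algebra over a field of characteristic $0$ in the variety of left-symmetric algebras satisfying $(ab)c+(ba)c+(ac)b+(ca)b+(bc)a+(cb)a=0$, and equip it with the anticommutator $\{a,b\}=ab+ba$. Then every polynomial identity of degree at most $4$ satisfied by $(\mathcal{LS}_{\mathfrak{A}_1}\langle X\rangle,\{\cdot,\cdot\})$ is a consequence of commutativity.
   Context: A left-symmetric algebra is an algebra with $(a,b,c)=(b,a,c)$, where $(a,b,c)=(ab)c-a(bc)$. *)

(* Defs.v *)
From HB Require Import structures.
From mathcomp Require Import all_boot all_order all_algebra.
Set Implicit Arguments. Unset Strict Implicit. Unset Printing Implicit Defensive.
Import GRing.Theory.
Local Open Scope ring_scope.

(* Syntactic nonassociative polynomials over F in the countably many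
   variables x_0, x_1, ... (the set X is identified with nat). *)
Inductive term (F : Type) : Type :=
  | tvar of nat
  | tzero
  | tadd of term F & term F
  | tscale of F & term F
  | tmul of term F & term F.
Arguments tzero {F}.
Arguments tvar {F} _%_N.

Section Terms.
Variable F : fieldType.
Local Notation term := (term F).

Definition tsub (a b : term) : term := tadd a (tscale (-1) b).

Fixpoint subst (s : nat -> term) (t : term) : term :=
  match t with
  | tvar i => s i
  | tzero => tzero
  | tadd a b => tadd (subst s a) (subst s b)
  | tscale c a => tscale c (subst s a)
  | tmul a b => tmul (subst s a) (subst s b)
  end.

Fixpoint anti_eval (s : nat -> term) (t : term) : term :=
  match t with
  | tvar i => s i
  | tzero => tzero
  | tadd a b => tadd (anti_eval s a) (anti_eval s b)
  | tscale c a => tscale c (anti_eval s a)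
  | tmul a b => let u := anti_eval s a in let v := anti_eval s b in
                tadd (tmul u v) (tmul v u)
  end.

(* syntactic degree; every element of the free algebra lying in the span of
   monomials of degree <= d has a representative with tdeg <= d *)
Fixpoint tdeg (t : term) : nat :=
  match t with
  | tvar _ => 1
  | tzero => 0
  | tadd a b => maxn (tdeg a) (tdeg b)
  | tscale _ a => tdeg a
  | tmul a b => tdeg a + tdeg b
  end.

(* teq S a b : a = b in the free nonassociative algebra F<X> modulo the
   T-ideal generated by the identities S (i.e. in the relatively free algebra
   of the variety defined by S). *)
Inductive teq (S : term -> Prop) : term -> term -> Prop :=
  | teq_refl a : teq S a a
  | teq_sym a b : teq S a b -> teq S b a
  | teq_trans a b c : teq S a b -> teq S b c -> teq S a c
  | teq_add a a' b b' : teq S a a' -> teq S b b' -> teq S (tadd a b) (tadd a' b')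
  | teq_scale c a a' : teq S a a' -> teq S (tscale c a) (tscale c a')
  | teq_mul a a' b b' : teq S a a' -> teq S b b' -> teq S (tmul a b) (tmul a' b')
  | teq_addA a b c : teq S (tadd a (tadd b c)) (tadd (tadd a b) c)
  | teq_addC a b : teq S (tadd a b) (tadd b a)
  | teq_add0 a : teq S (tadd tzero a) a
  | teq_addN a : teq S (tadd a (tscale (-1) a)) tzero
  | teq_scale1 a : teq S (tscale 1 a) a
  | teq_scaleA c d a : teq S (tscale c (tscale d a)) (tscale (c * d) a)
  | teq_scaleDr c a b : teq S (tscale c (tadd a b)) (tadd (tscale c a) (tscale c b))
  | teq_scaleDl c d a : teq S (tscale (c + d) a) (tadd (tscale c a) (tscale d a))
  | teq_mulDl a b c : teq S (tmul (tadd a b) c) (tadd (tmul a c) (tmul b c))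
  | teq_mulDr a b c : teq S (tmul a (tadd b c)) (tadd (tmul a b) (tmul a c))
  | teq_mulZl c a b : teq S (tmul (tscale c a) b) (tscale c (tmul a b))
  | teq_mulZr c a b : teq S (tmul a (tscale c b)) (tscale c (tmul a b))
  | teq_id f s : S f -> teq S (subst s f) tzero.

Definition tx0 : term := tvar 0%N.
Definition tx1 : term := tvar 1%N.
Definition tx2 : term := tvar 2%N.

Definition tassoc (a b c : term) : term := tsub (tmul (tmul a b) c) (tmul a (tmul b c)).

Definition ls_id : term := tsub (tassoc tx0 tx1 tx2) (tassoc tx1 tx0 tx2).

Definition A1_id : term :=
  tadd (tmul (tmul tx0 tx1) tx2) (tadd (tmul (tmul tx1 tx0) tx2)
  (tadd (tmul (tmul tx0 tx2) tx1) (tadd (tmul (tmul tx2 tx0) tx1)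
  (tadd (tmul (tmul tx1 tx2) tx0) (tmul (tmul tx2 tx1) tx0))))).

Definition LSA1 (f : term) : Prop := f = ls_id \/ f = A1_id.

Definition comm_ids (f : term) : Prop := f = tsub (tmul tx0 tx1) (tmul tx1 tx0).

Definition is_anti_identity_LSA1 (f : term) : Prop :=
  forall s : nat -> term, teq LSA1 (anti_eval s f) tzero.

Definition consequence_of_comm (f : term) : Prop := teq comm_ids f tzero.

End Terms.

(* Main.v *)
Require Import Defs.
From HB Require Import structures.
From mathcomp Require Import all_boot all_order all_algebra.
From mathcomp Require Import zify ring.
From Stdlib Require Import Setoid Morphisms.
Set Implicit Arguments. Unset Strict Implicit. Unset Printing Implicit Defensive.
Import GRing.Theory.
Local Open Scope ring_scope.

(* Proof strategy:
   - a normal form for the free commutative nonassociative algebra (coefficients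
     of words up to the commutative equivalence ceq) gives: if all coefficients
     of f vanish then f is a consequence of commutativity;
   - a linear functional Phi (built from an explicit S_n-equivariant left
     inverse psi1 of the anticommutator map in degrees <= 4, with integer
     coefficients, scaled by 24) is invariant under the T-ideal of LS_{A1};
     its value on anti_eval f is 24 times the coefficient vector of f. *)

Inductive nm := NL of nat | NN of nm & nm.
Inductive sh := SL | SN of sh & sh.

Fixpoint nm_eqb (a b : nm) : bool :=
  match a, b with
  | NL i, NL j => i == j
  | NN a1 a2, NN b1 b2 => nm_eqb a1 b1 && nm_eqb a2 b2
  | _, _ => false end.
Lemma nm_eqP : Equality.axiom nm_eqb.
Proof.
elim=> [i|a1 IH1 a2 IH2] [j|b1 b2] /=; try by constructor.
- by apply: (iffP eqP) => [->|[]].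
- by apply: (iffP andP) => [[/IH1 -> /IH2 ->]|[<- <-]]; split; [apply/IH1|apply/IH2].
Qed.
HB.instance Definition _ := hasDecEq.Build nm nm_eqP.

Fixpoint relabel (l : nat -> nat) (w : nm) : nm :=
  match w with NL i => NL (l i) | NN a b => NN (relabel l a) (relabel l b) end.
Fixpoint nsize (w : nm) : nat :=
  match w with NL _ => 1%N | NN a b => (nsize a + nsize b)%N end.
Fixpoint leaves (w : nm) : seq nat :=
  match w with NL i => [:: i] | NN a b => leaves a ++ leaves b end.
Fixpoint shp (w : nm) : sh :=
  match w with NL _ => SL | NN a b => SN (shp a) (shp b) end.
Fixpoint ceq (a b : nm) : bool :=
  match a, b with
  | NL i, NL j => i == j
  | NN a1 a2, NN b1 b2 => (ceq a1 b1 && ceq a2 b2) || (ceq a1 b2 && ceq a2 b1)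
  | _, _ => false end.

Definition PS (s : sh) : seq (int * nm) :=
  match s with
  | SL => [:: (24%:Z, (NL 0))]
  | (SN SL SL) => [:: (12%:Z, (NN (NL 0) (NL 1)))]
  | (SN SL (SN SL SL)) => [:: (12%:Z, (NN (NL 0) (NN (NL 1) (NL 2)))); (12%:Z, (NN (NL 1) (NN (NL 0) (NL 2)))); (-12%:Z, (NN (NL 2) (NN (NL 0) (NL 1))))]
  | (SN SL (SN SL (SN SL SL))) => [:: (12%:Z, (NN (NL 0) (NN (NL 1) (NN (NL 2) (NL 3))))); (12%:Z, (NN (NL 0) (NN (NL 2) (NN (NL 1) (NL 3))))); (-12%:Z, (NN (NL 0) (NN (NL 3) (NN (NL 1) (NL 2))))); (8%:Z, (NN (NL 1) (NN (NL 2) (NN (NL 0) (NL 3))))); (-8%:Z, (NN (NL 1) (NN (NL 3) (NN (NL 0) (NL 2))))); (-4%:Z, (NN (NL 2) (NN (NL 0) (NN (NL 1) (NL 3))))); (-4%:Z, (NN (NL 2) (NN (NL 1) (NN (NL 0) (NL 3))))); (-4%:Z, (NN (NL 2) (NN (NL 3) (NN (NL 0) (NL 1))))); (4%:Z, (NN (NL 3) (NN (NL 0) (NN (NL 1) (NL 2))))); (4%:Z, (NN (NL 3) (NN (NL 1) (NN (NL 0) (NL 2))))); (4%:Z, (NN (NL 3) (NN (NL 2) (NN (NL 0) (NL 1))))); (3%:Z, (NN (NN (NL 0) (NL 1)) (NN (NL 2) (NL 3)))); (-1%:Z, (NN (NN (NL 0) (NL 2)) (NN (NL 1) (NL 3))));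 (1%:Z, (NN (NN (NL 0) (NL 3)) (NN (NL 1) (NL 2))))]
  | (SN SL (SN (SN SL SL) SL)) => [:: (2%:Z, (NN (NL 1) (NN (NL 0) (NN (NL 2) (NL 3))))); (6%:Z, (NN (NL 1) (NN (NL 2) (NN (NL 0) (NL 3))))); (-2%:Z, (NN (NL 1) (NN (NL 3) (NN (NL 0) (NL 2))))); (-2%:Z, (NN (NL 2) (NN (NL 0) (NN (NL 1) (NL 3))))); (-6%:Z, (NN (NL 2) (NN (NL 1) (NN (NL 0) (NL 3))))); (2%:Z, (NN (NL 2) (NN (NL 3) (NN (NL 0) (NL 1))))); (2%:Z, (NN (NN (NL 0) (NL 1)) (NN (NL 2) (NL 3)))); (-2%:Z, (NN (NN (NL 0) (NL 2)) (NN (NL 1) (NL 3))))]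
  | (SN (SN SL SL) (SN SL SL)) => [:: (6%:Z, (NN (NL 0) (NN (NL 1) (NN (NL 2) (NL 3))))); (2%:Z, (NN (NL 0) (NN (NL 2) (NN (NL 1) (NL 3))))); (-2%:Z, (NN (NL 0) (NN (NL 3) (NN (NL 1) (NL 2))))); (-6%:Z, (NN (NL 1) (NN (NL 0) (NN (NL 2) (NL 3))))); (-2%:Z, (NN (NL 1) (NN (NL 2) (NN (NL 0) (NL 3))))); (2%:Z, (NN (NL 1) (NN (NL 3) (NN (NL 0) (NL 2))))); (3%:Z, (NN (NN (NL 0) (NL 1)) (NN (NL 2) (NL 3)))); (-1%:Z, (NN (NN (NL 0) (NL 2)) (NN (NL 1) (NL 3)))); (1%:Z, (NN (NN (NL 0) (NL 3)) (NN (NL 1) (NL 2))))]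
  | (SN (SN SL (SN SL SL)) SL) => [:: (3%:Z, (NN (NN (NL 0) (NL 1)) (NN (NL 2) (NL 3)))); (-3%:Z, (NN (NN (NL 0) (NL 2)) (NN (NL 1) (NL 3)))); (-3%:Z, (NN (NN (NL 0) (NL 3)) (NN (NL 1) (NL 2))))]
  | _ => [::]
  end.

Definition lbl_ok (n : nat) (x : int * nm) := all (fun i => (i < n)%N) (leaves x.2).
Definition psi1 (w : nm) : seq (int * nm) :=
  if (nsize w <= 4)%N then
    [seq (x.1, relabel (nth 0%N (leaves w)) x.2) | x <- PS (shp w) & lbl_ok (nsize w) x]
  else [::].

Fixpoint coefc (p : seq (int * nm)) (m : nm) : int :=
  match p with [::] => 0 | x :: p' => x.1 * (ceq x.2 m)%:Z + coefc p' m end.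
Definition czero (p : seq (int * nm)) : bool := all (fun x => coefc p x.2 == 0) p.

Fixpoint AEi (w : nm) : seq nm :=
  match w with NL i => [:: NL i]
  | NN a b => [seq NN x y | x <- AEi a, y <- AEi b] ++ [seq NN y x | x <- AEi a, y <- AEi b] end.

Definition LA (g : nm) := flatten [seq psi1 u | u <- AEi g] ++ [:: (-24, g)].

Definition scl (c : int) (p : seq (int * nm)) := [seq (c * x.1, x.2) | x <- p].
Definition LB (L : seq (int * nm)) := flatten [seq scl x.1 (psi1 x.2) | x <- L].

Definition gls (a b c : nm) : seq (int * nm) :=
  [:: (1, NN (NN a b) c); (-1, NN a (NN b c)); (-1, NN (NN b a) c); (1, NN b (NN a c))].
Definition gA1 (a b c : nm) : seq (int * nm) :=
  [:: (1, NN (NN a b) c); (1, NN (NN b a) c); (1, NN (NN a c) b); (1, NN (NN c a) b);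
      (1, NN (NN b c) a); (1, NN (NN c b) a)].


Inductive wctx := WH | WLc of wctx & nm | WRc of nm & wctx.
Fixpoint wctx_eqb (a b : wctx) : bool :=
  match a, b with
  | WH, WH => true
  | WLc a1 a2, WLc b1 b2 => wctx_eqb a1 b1 && (a2 == b2)
  | WRc a1 a2, WRc b1 b2 => (a1 == b1) && wctx_eqb a2 b2
  | _, _ => false end.
Lemma wctx_eqP : Equality.axiom wctx_eqb.
Proof.
elim=> [|a1 IH1 a2|a1 a2 IH2] [|b1 b2|b1 b2] /=; try by constructor.
- by apply: (iffP andP) => [[/IH1 -> /eqP ->]|[<- <-]]; split; [apply/IH1|].
- by apply: (iffP andP) => [[/eqP -> /IH2 ->]|[<- <-]]; split; [|apply/IH2].
Qed.
HB.instance Definition _ := hasDecEq.Build wctx wctx_eqP.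

Fixpoint wplug (D : wctx) (x : nm) : nm :=
  match D with WH => x | WLc D' v => wplug D' (NN x v) | WRc v D' => wplug D' (NN v x) end.
Fixpoint dsz (D : wctx) : nat :=
  match D with WH => 0%N | WLc D' v => (dsz D' + nsize v)%N | WRc v D' => (nsize v + dsz D')%N end.
Fixpoint wrel (l : nat -> nat) (D : wctx) : wctx :=
  match D with WH => WH | WLc D' v => WLc (wrel l D') (relabel l v)
  | WRc v D' => WRc (relabel l v) (wrel l D') end.
Fixpoint dleaves (D : wctx) : seq nat :=
  match D with WH => [::] | WLc D' v => leaves v ++ dleaves D' | WRc v D' => leaves v ++ dleaves D' end.
Fixpoint stdk (k : nat) (w : nm) : nm :=
  match w with NL _ => NL k | NN a b => NN (stdk k a) (stdk (k + nsize a) b) end.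
Fixpoint dstdk (k : nat) (D : wctx) : wctx :=
  match D with WH => WH
  | WLc D' v => WLc (dstdk (k + nsize v) D') (stdk k v)
  | WRc v D' => WRc (stdk k v) (dstdk (k + nsize v) D') end.

Lemma nsize_gt0 w : (0 < nsize w)%N.
Proof. by elim: w => //= a IHa b IHb; rewrite addn_gt0 IHa. Qed.
Lemma size_leaves w : size (leaves w) = nsize w.
Proof. by elim: w => //= a IHa b IHb; rewrite size_cat IHa IHb. Qed.
Lemma nsize_relabel l w : nsize (relabel l w) = nsize w.
Proof. by elim: w => //= a -> b ->. Qed.
Lemma shp_relabel l w : shp (relabel l w) = shp w.
Proof. by elim: w => //= a -> b ->. Qed.
Lemma leaves_relabel l w : leaves (relabel l w) = map l (leaves w).
Proof. by elim: w => //= a -> b ->; rewrite map_cat. Qed.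
Lemma relabel_comp l1 l2 w : relabel l1 (relabel l2 w) = relabel (l1 \o l2) w.
Proof. by elim: w => //= a -> b ->. Qed.
Lemma relabel_eq_in l1 l2 w : {in leaves w, l1 =1 l2} -> relabel l1 w = relabel l2 w.
Proof.
elim: w => [i|a IHa b IHb] /= H; first by rewrite H // inE.
by rewrite IHa ?IHb // => x Hx; apply: H; rewrite mem_cat Hx ?orbT.
Qed.
Lemma nsize_wplug D w : nsize (wplug D w) = (nsize w + dsz D)%N.
Proof.
elim: D w => [|D IH v|v D IH] w /=; first by rewrite addn0.
- by rewrite IH /=; lia.
- by rewrite IH /=; lia.
Qed.
Lemma wplug_relabel l D w : relabel l (wplug D w) = wplug (wrel l D) (relabel l w).
Proof. by elim: D w => [|D IH v|v D IH] w //=; rewrite IH. Qed.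

Lemma relabel_stdk l1 l2 w :
  relabel (nth 0%N (l1 ++ leaves w ++ l2)) (stdk (size l1) w) = w.
Proof.
elim: w l1 l2 => [i|a IHa b IHb] l1 l2 /=.
  by rewrite nth_cat ltnn subnn.
rewrite -catA IHa; congr NN.
have := IHb (l1 ++ leaves a) l2; rewrite -!catA size_cat size_leaves => ->.
by [].
Qed.
Lemma wrel_dstdk l1 l2 D :
  wrel (nth 0%N (l1 ++ dleaves D ++ l2)) (dstdk (size l1) D) = D.
Proof.
elim: D l1 l2 => [|D IH v|v D IH] l1 l2 //=.
- rewrite -catA relabel_stdk; congr WLc.
  by have := IH (l1 ++ leaves v) l2; rewrite -!catA size_cat size_leaves.
- rewrite -catA relabel_stdk; congr WRc.
  by have := IH (l1 ++ leaves v) l2; rewrite -!catA size_cat size_leaves.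
Qed.

Lemma ceq_refl a : ceq a a.
Proof. by elim: a => //= a -> b ->. Qed.
Lemma ceq_sym a b : ceq a b = ceq b a.
Proof.
elim: a b => [i|a1 IH1 a2 IH2] [j|b1 b2] //=; try by apply/idP/idP => /eqP ->.
by rewrite IH1 IH2 (IH1 b2) (IH2 b1) [ceq b2 a1 && _]andbC.
Qed.
Lemma ceq_trans b a c : ceq a b -> ceq b c -> ceq a c.
Proof.
elim: b a c => [j|b1 IH1 b2 IH2] [i|a1 a2] [k|c1 c2] //=.
  by move=> /eqP -> /eqP ->.
case/orP=> /andP [h1 h2] /orP [] /andP [h3 h4].
- by rewrite (IH1 _ _ h1 h3) (IH2 _ _ h2 h4).
- by rewrite (IH1 _ _ h1 h3) (IH2 _ _ h2 h4) orbT.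
- by rewrite (IH2 _ _ h1 h4) (IH1 _ _ h2 h3) orbT.
- by rewrite (IH2 _ _ h1 h4) (IH1 _ _ h2 h3).
Qed.
Lemma ceq_relabel l a b : ceq a b -> ceq (relabel l a) (relabel l b).
Proof.
elim: a b => [i|a1 IH1 a2 IH2] [j|b1 b2] //=; first by move/eqP->.
by case/orP=> /andP [h1 h2]; rewrite ?(IH1 _ h1) ?(IH2 _ h2) ?(IH1 _ h2) ?(IH2 _ h1) ?orbT.
Qed.
Lemma ceq_nsize a b : ceq a b -> nsize a = nsize b.
Proof.
elim: a b => [i|a1 IH1 a2 IH2] [j|b1 b2] //=.
by case/orP=> /andP [h1 h2]; rewrite (IH1 _ h1) (IH2 _ h2) // addnC.
Qed.


Fixpoint sumP (p : seq (int * nm)) (P : nm -> bool) : int :=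
  match p with [::] => 0 | x :: p' => x.1 * (P x.2)%:Z + sumP p' P end.
Lemma coefcE p m : coefc p m = sumP p (fun w => ceq w m).
Proof. by elim: p => //= x p ->. Qed.
Lemma sumP_cat p q P : sumP (p ++ q) P = sumP p P + sumP q P.
Proof. by elim: p => [|x p IH] /=; rewrite ?add0r // IH addrA. Qed.
Lemma sumP_ext p P Q : P =1 Q -> sumP p P = sumP p Q.
Proof. by move=> E; elim: p => //= x p ->; rewrite E. Qed.
Lemma sumP_split p P b :
  sumP p P = sumP p (fun w => b w && P w) + sumP p (fun w => ~~ b w && P w).
Proof.
elim: p => [|x p IH] /=; first by rewrite addr0.
rewrite IH; case: (b x.2); case: (P x.2) => /=; lia.
Qed.
Lemma sumP_filter p P b : sumP [seq x <- p | b x.2] P = sumP p (fun w => b w && P w).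
Proof. by elim: p => //= x p IH; case: (b x.2) => /=; rewrite IH // mulr0 add0r. Qed.
Lemma sumP_const p P c : (forall w, P w = c) -> sumP p P = (c%:Z) * sumP p (fun _ => true).
Proof.
move=> E; elim: p => [|x p IH] /=; first by rewrite mulr0.
by rewrite IH E mulrDr mulr1 mulrC.
Qed.

Lemma class_zero n p : (size p <= n)%N -> (forall m, coefc p m = 0) ->
  forall P, (forall a b, ceq a b -> P a = P b) -> sumP p P = 0.
Proof.
elim: n p => [|n IH] [|x0 p] //= Hs Hz P HP.
set w0 := x0.2.
have := sumP_split (x0 :: p) P (fun w => ceq w w0) => /= ->.
have -> : x0.1 * (ceq w0 w0 && P w0)%:Z +
     sumP p (fun w => ceq w w0 && P w) = (P w0)%:Z * coefc (x0 :: p) w0.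
  rewrite coefcE /=.
  have E : forall q, sumP q (fun w => ceq w w0 && P w) = (P w0)%:Z * sumP q (fun w => ceq w w0).
    elim=> [|y q IHq] /=; first by rewrite mulr0.
    rewrite IHq mulrDr; congr (_ + _).
    case E1: (ceq y.2 w0) => /=; last by rewrite !mulr0.
    by rewrite (HP _ _ E1); case: (P w0) => /=; lia.
  by rewrite E mulrDr ceq_refl /=; case: (P w0) => /=; lia.
rewrite (_ : coefc (x0 :: p) w0 = 0); last exact: Hz.
rewrite mulr0 add0r /w0 ceq_refl /= ?mulr0 ?add0r.
rewrite -sumP_filter; apply: IH => //.
- by rewrite size_filter (leq_trans (count_size _ _)).
- move=> m; rewrite coefcE (sumP_filter _ _ (fun w => ~~ ceq w w0)).
  case Hm: (ceq w0 m).
    rewrite (sumP_ext _ (Q := fun _ => false)); first by elim: (p) => //= y q ->; rewrite mulr0.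
    move=> w; case E1: (ceq w m); rewrite ?andbF //.
    by rewrite (ceq_trans E1 (_ : ceq m w0)) // ceq_sym.
  have := Hz m; rewrite -/w0 Hm mulr0 add0r coefcE => <-.
  apply: sumP_ext => w; case E1: (ceq w m); rewrite ?andbF ?andbT //.
  apply/negP => E2.
  have : ceq w0 m by apply: (@ceq_trans w) => //; rewrite ceq_sym.
  by rewrite Hm.
Qed.

Definition rl2 (l : nat -> nat) (x : int * nm) := (x.1, relabel l x.2).

Lemma relabel_zero p l : (forall m, coefc p m = 0) -> forall m, coefc (map (rl2 l) p) m = 0.
Proof.
move=> Hz m.
have -> : coefc (map (rl2 l) p) m = sumP p (fun w => ceq (relabel l w) m).
  by elim: p {Hz} => //= x p ->.
apply: (@class_zero (size p)) => // a b Hab.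
apply/idP/idP => H.
- by apply: ceq_trans H; rewrite ceq_sym; apply: ceq_relabel.
- by apply: ceq_trans H; apply: ceq_relabel.
Qed.

Lemma czeroP p : czero p -> forall m, coefc p m = 0.
Proof.
move=> /allP Hc m.
case: (boolP (has (fun x => ceq x.2 m) p)).
  case/hasP=> x xp Hx.
  rewrite -(eqP (Hc x xp)) !coefcE; apply: sumP_ext => w.
  apply/idP/idP => H; first by apply: ceq_trans H _; rewrite ceq_sym.
  exact: ceq_trans H Hx.
rewrite -all_predC coefcE => /allP Ha.
elim: p Ha {Hc} => //= x p IH Ha.
rewrite IH; last by move=> y yp; apply: Ha; rewrite inE yp orbT.
by have := Ha x; rewrite inE eqxx /= => /(_ isT) /negbTE ->; rewrite mulr0 addr0.
Qed.

Lemma coefc_cat p q m : coefc (p ++ q) m = coefc p m + coefc q m.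
Proof. by rewrite !coefcE sumP_cat. Qed.
Lemma coefc_flatten (s : seq nm) (f : nm -> seq (int * nm)) m :
  coefc (flatten (map f s)) m = \sum_(u <- s) coefc (f u) m.
Proof. by elim: s => [|u s IH] /=; rewrite ?big_nil ?big_cons // coefc_cat IH. Qed.
Lemma coefc_scl c p m : coefc (scl c p) m = c * coefc p m.
Proof.
elim: p => [|x p IH] /=; first by rewrite mulr0.
by rewrite IH mulrDr mulrA.
Qed.
Lemma coefc_flattenL (L : seq (int * nm)) m :
  coefc (LB L) m = \sum_(x <- L) x.1 * coefc (psi1 x.2) m.
Proof.
rewrite /LB; elim: L => [|x L IH] /=; rewrite ?big_nil ?big_cons //.
by rewrite coefc_cat IH coefc_scl.
Qed.

Lemma psi1_relabel l w : psi1 (relabel l w) = map (rl2 l) (psi1 w).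
Proof.
rewrite /psi1 nsize_relabel shp_relabel leaves_relabel.
case: ifP => // _.
rewrite -!map_comp; apply/eq_in_map => x; rewrite mem_filter => /andP [ok _].
rewrite /rl2 /= relabel_comp; congr (_, _).
apply: relabel_eq_in => i Hi /=.
have Hi' : (i < size (leaves w))%N.
  by rewrite size_leaves; move/allP: ok; apply.
by rewrite (nth_map 0%N).
Qed.
Lemma psi1_big w : (4 < nsize w)%N -> psi1 w = [::].
Proof. by rewrite /psi1 ltnNge => /negbTE ->. Qed.
Lemma coefc_nil m : coefc [::] m = 0. Proof. by []. Qed.

Lemma AEi_relabel l w : AEi (relabel l w) = map (relabel l) (AEi w).
Proof.
elim: w => //= a IHa b IHb.
by rewrite IHa IHb map_cat !map_allpairs !allpairs_mapl !allpairs_mapr.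
Qed.


Ltac des_small := repeat match goal with
 | w : nm |- _ => let i := fresh "i" in let a := fresh "a" in let b := fresh "b" in
     destruct w as [i|a b];
     [ idtac | have ? := nsize_gt0 a; have ? := nsize_gt0 b ];
     simpl in *; try (exfalso; lia)
 | D : wctx |- _ => let v := fresh "v" in let D' := fresh "D" in
     destruct D as [|D' v|v D'];
     [ idtac | have ? := nsize_gt0 v | have ? := nsize_gt0 v ];
     simpl in *; try (exfalso; lia)
 end.

Definition n0 := NL 0. Definition n1 := NL 1. Definition n2 := NL 2. Definition n3 := NL 3.
Definition SH9 := [:: n0; NN n0 n1; NN n0 (NN n1 n2); NN (NN n0 n1) n2;
  NN n0 (NN n1 (NN n2 n3)); NN n0 (NN (NN n1 n2) n3); NN (NN n0 n1) (NN n2 n3);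
  NN (NN n0 (NN n1 n2)) n3; NN (NN (NN n0 n1) n2) n3].

Lemma testA : all (fun g => czero (LA g)) SH9.
Proof. by vm_compute. Qed.

Lemma small_shapes w : (nsize w <= 4)%N -> stdk 0 w \in SH9.
Proof. move=> H; des_small; by vm_compute. Qed.

Lemma A_int w : (nsize w <= 4)%N ->
  forall m, \sum_(u <- AEi w) coefc (psi1 u) m = 24 * (ceq w m)%:Z.
Proof.
move=> Hw m.
have Hg : czero (LA (stdk 0 w)) by move/allP: testA; apply; exact: small_shapes.
have Ew : w = relabel (nth 0%N (leaves w)) (stdk 0 w).
  by have := relabel_stdk [::] [::] w; rewrite cats0.
move: (stdk 0 w) (nth 0%N (leaves w)) Ew Hg => g l -> Hg.
have := relabel_zero l (czeroP Hg) m.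
rewrite /LA map_cat coefc_cat /= map_flatten -map_comp coefc_flatten.
rewrite AEi_relabel big_map.
under eq_bigr do rewrite psi1_relabel.
rewrite /=; lia.
Qed.

Definition TB := [:: (n0, n1, n2, WH); (n0, n1, n2, WLc WH n3); (n0, n1, n2, WRc n3 WH);
  (NN n0 n1, n2, n3, WH); (n0, NN n1 n2, n3, WH); (n0, n1, NN n2 n3, WH)].

Definition checkB (G : nm -> nm -> nm -> seq (int * nm)) :=
  all (fun t => czero (LB [seq (x.1, wplug t.2 x.2) | x <- G t.1.1.1 t.1.1.2 t.1.2])) TB.

Lemma testB : checkB gls && checkB gA1.
Proof. by vm_compute. Qed.

Lemma small_tuple u0 u1 u2 D :
  (nsize u0 + nsize u1 + nsize u2 + dsz D <= 4)%N ->
  (stdk 0 u0, stdk (nsize u0) u1, stdk (nsize u0 + nsize u1) u2,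
   dstdk (nsize u0 + nsize u1 + nsize u2) D) \in TB.
Proof. move=> H; des_small; by vm_compute. Qed.

Lemma map_rl2_LB l L : map (rl2 l) (LB L) = LB (map (rl2 l) L).
Proof.
rewrite /LB map_flatten -!map_comp; congr flatten; apply: eq_map => x /=.
rewrite psi1_relabel /scl -!map_comp; apply: eq_map => y //.
Qed.

Lemma B_int (G : nm -> nm -> nm -> seq (int * nm)) :
  (forall l a b c, G (relabel l a) (relabel l b) (relabel l c) = map (rl2 l) (G a b c)) ->
  (forall a b c, all (fun x => nsize x.2 == (nsize a + nsize b + nsize c)%N) (G a b c)) ->
  checkB G ->
  forall D u0 u1 u2 m, \sum_(x <- G u0 u1 u2) x.1 * coefc (psi1 (wplug D x.2)) m = 0.
Proof.
move=> HGr HGs HG D u0 u1 u2 m.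
case: (leqP (nsize u0 + nsize u1 + nsize u2 + dsz D) 4) => Hle; last first.
  rewrite big_seq big1 // => x /(allP (HGs u0 u1 u2)) /eqP Hx.
  by rewrite psi1_big ?mulr0 // nsize_wplug Hx.
have := allP HG _ (small_tuple Hle) => /= Hc.
set l := nth 0%N (leaves u0 ++ leaves u1 ++ leaves u2 ++ dleaves D).
have E0 : relabel l (stdk 0 u0) = u0 by rewrite /l (relabel_stdk [::]).
have E1 : relabel l (stdk (nsize u0) u1) = u1.
  by rewrite /l -(size_leaves u0) relabel_stdk.
have E2 : relabel l (stdk (nsize u0 + nsize u1) u2) = u2.
  by rewrite /l catA -(size_leaves u0) -(size_leaves u1) -size_cat relabel_stdk.
have E3 : wrel l (dstdk (nsize u0 + nsize u1 + nsize u2) D) = D.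
  have := wrel_dstdk ((leaves u0 ++ leaves u1) ++ leaves u2) [::] D.
  by rewrite cats0 !size_cat !size_leaves -!catA.
have H := relabel_zero l (czeroP Hc) m.
rewrite map_rl2_LB coefc_flattenL -map_comp big_map in H.
apply: etrans H; rewrite -{1}E0 -{1}E1 -{1}E2 HGr big_map; apply: eq_bigr => x _ /=.
by rewrite wplug_relabel E3.
Qed.

Lemma gls_ok : forall D u0 u1 u2 m,
  \sum_(x <- gls u0 u1 u2) x.1 * coefc (psi1 (wplug D x.2)) m = 0.
Proof.
apply: B_int.
- by [].
- move=> a b c /=; rewrite !eqn_add2l; lia.
- by case/andP: testB.
Qed.
Lemma gA1_ok : forall D u0 u1 u2 m,
  \sum_(x <- gA1 u0 u1 u2) x.1 * coefc (psi1 (wplug D x.2)) m = 0.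
Proof.
apply: B_int.
- by [].
- move=> a b c /=; lia.
- by case/andP: testB.
Qed.


Section Sem.
Variable F : fieldType.
Local Notation term := (term F).

Fixpoint tm (w : nm) : term := match w with NL i => tvar i | NN a b => tmul (tm a) (tm b) end.

Fixpoint expand (t : term) : seq (F * nm) :=
  match t with
  | tvar i => [:: (1, NL i)]
  | tzero => [::]
  | tadd a b => expand a ++ expand b
  | tscale c a => [seq (c * x.1, x.2) | x <- expand a]
  | tmul a b => [seq (x.1 * y.1, NN x.2 y.2) | x <- expand a, y <- expand b]
  end.

Definition sumL (p : seq (F * nm)) (h : nm -> F) := \sum_(x <- p) x.1 * h x.2.

Lemma sumL_cat p q h : sumL (p ++ q) h = sumL p h + sumL q h.
Proof. by rewrite /sumL big_cat. Qed.
Lemma sumL_nil h : sumL [::] h = 0.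
Proof. by rewrite /sumL big_nil. Qed.
Lemma sumL_scale c p h : sumL [seq (c * x.1, x.2) | x <- p] h = c * sumL p h.
Proof. by rewrite /sumL big_map mulr_sumr; apply: eq_bigr => x _ /=; rewrite mulrA. Qed.
Lemma sumL_mul p q h :
  sumL [seq (x.1 * y.1, NN x.2 y.2) | x <- p, y <- q] h =
  sumL p (fun u => sumL q (fun v => h (NN u v))).
Proof.
rewrite /sumL big_flatten big_map; apply: eq_bigr => x _.
rewrite big_map mulr_sumr; apply: eq_bigr => y _ /=; by rewrite mulrA.
Qed.
Lemma eq_sumL p h1 h2 : (forall w, h1 w = h2 w) -> sumL p h1 = sumL p h2.
Proof. by move=> E; apply: eq_bigr => x _; rewrite E. Qed.
Lemma sumL_swap p q (k : nm -> nm -> F) :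
  sumL p (fun u => sumL q (fun v => k u v)) = sumL q (fun v => sumL p (fun u => k u v)).
Proof.
rewrite /sumL.
under eq_bigr do rewrite mulr_sumr.
rewrite exchange_big /=; apply: eq_bigr => y _.
rewrite mulr_sumr; apply: eq_bigr => x _; by rewrite mulrCA.
Qed.
Lemma sumL_add p h1 h2 : sumL p (fun w => h1 w + h2 w) = sumL p h1 + sumL p h2.
Proof. by rewrite /sumL -big_split; apply: eq_bigr => x _; rewrite mulrDr. Qed.
Lemma sumL_scaler p c h : sumL p (fun w => c * h w) = c * sumL p h.
Proof. by rewrite /sumL mulr_sumr; apply: eq_bigr => x _; rewrite mulrCA. Qed.
Lemma sumL_0 p : sumL p (fun _ => 0) = 0.
Proof. by rewrite /sumL big1 // => x _; rewrite mulr0. Qed.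

Definition psiF (w m : nm) : F := (coefc (psi1 w) m)%:~R.
Definition Phi (D : wctx) (m : nm) (t : term) := sumL (expand t) (fun w => psiF (wplug D w) m).

Fixpoint NS (s : nat -> term) (w : nm) (h : nm -> F) : F :=
  match w with
  | NL i => sumL (expand (s i)) h
  | NN a b => NS s a (fun u => NS s b (fun v => h (NN u v)))
  end.
Lemma eq_NS s w h1 h2 : (forall u, h1 u = h2 u) -> NS s w h1 = NS s w h2.
Proof.
elim: w h1 h2 => [i|a IHa b IHb] h1 h2 E /=; first exact: eq_sumL.
by apply: IHa => u; apply: IHb => v.
Qed.
Lemma NS_sumL s w q (k : nm -> nm -> F) :
  NS s w (fun u => sumL q (fun v => k u v)) = sumL q (fun v => NS s w (fun u => k u v)).
Proof.
elim: w k => [i|a IHa b IHb] k /=; first exact: sumL_swap.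
rewrite (eq_NS _ _ (h2 := fun u => sumL q (fun v => NS s b (fun u' => k (NN u u') v)))).
  exact: IHa.
by move=> u; rewrite IHb.
Qed.

Lemma subst_lin s t h :
  sumL (expand (subst s t)) h = sumL (expand t) (fun w => NS s w h).
Proof.
elim: t h => [i||a IHa b IHb|c a IHa|a IHa b IHb] h /=.
- by rewrite /sumL big_cons big_nil mul1r addr0.
- by rewrite !sumL_nil.
- by rewrite !sumL_cat IHa IHb.
- by rewrite !sumL_scale IHa.
- rewrite !sumL_mul IHa; apply: eq_sumL => w.
  rewrite (eq_NS _ _ (h2 := fun u => sumL (expand b) (fun w' => NS s w' (fun v => h (NN u v))))).
    by rewrite NS_sumL.
  by move=> u; rewrite IHb.
Qed.

Definition T3 (E0 E1 E2 : seq (F * nm)) (k : nm -> nm -> nm -> F) :=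
  sumL E0 (fun a => sumL E1 (fun b => sumL E2 (fun c => k a b c))).

Section Perms.
Variables (E0 E1 E2 : seq (F * nm)).
Lemma P102 k : sumL E1 (fun b => sumL E0 (fun a => sumL E2 (fun c => k a b c))) = T3 E0 E1 E2 k.
Proof. by rewrite /T3 sumL_swap. Qed.
Lemma P021 k : sumL E0 (fun a => sumL E2 (fun c => sumL E1 (fun b => k a b c))) = T3 E0 E1 E2 k.
Proof. by rewrite /T3; apply: eq_sumL => a; rewrite sumL_swap. Qed.
Lemma P201 k : sumL E2 (fun c => sumL E0 (fun a => sumL E1 (fun b => k a b c))) = T3 E0 E1 E2 k.
Proof. by rewrite sumL_swap P021. Qed.
Lemma P120 k : sumL E1 (fun b => sumL E2 (fun c => sumL E0 (fun a => k a b c))) = T3 E0 E1 E2 k.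
Proof.
rewrite -P102; apply: eq_sumL => b; by rewrite sumL_swap.
Qed.
Lemma P210 k : sumL E2 (fun c => sumL E1 (fun b => sumL E0 (fun a => k a b c))) = T3 E0 E1 E2 k.
Proof.
rewrite -P201; apply: eq_sumL => c; by rewrite sumL_swap.
Qed.
End Perms.


Lemma T3_add E0 E1 E2 k1 k2 : T3 E0 E1 E2 k1 + T3 E0 E1 E2 k2 =
  T3 E0 E1 E2 (fun a b c => k1 a b c + k2 a b c).
Proof.
rewrite /T3 -sumL_add; apply: eq_sumL => a; rewrite -sumL_add; apply: eq_sumL => b.
by rewrite -sumL_add.
Qed.
Lemma T3_scale E0 E1 E2 c k : c * T3 E0 E1 E2 k = T3 E0 E1 E2 (fun a b d => c * k a b d).
Proof.
rewrite /T3 -sumL_scaler; apply: eq_sumL => a; rewrite -sumL_scaler; apply: eq_sumL => b.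
by rewrite -sumL_scaler.
Qed.
Lemma T3_0 E0 E1 E2 k : (forall a b c, k a b c = 0) -> T3 E0 E1 E2 k = 0.
Proof.
move=> H; rewrite /T3 -(sumL_0 E0); apply: eq_sumL => a; rewrite -(sumL_0 E1).
apply: eq_sumL => b; rewrite -(sumL_0 E2); exact: eq_sumL.
Qed.

Arguments NS : simpl never.

Lemma Phi_ls D m s : Phi D m (subst s (ls_id F)) = 0.
Proof.
rewrite /Phi subst_lin.
set h := fun w => psiF (wplug D w) m.
rewrite /ls_id /tassoc /tsub /tx0 /tx1 /tx2 /= /sumL !big_cons big_nil /=.
set E0 := expand (s 0%N); set E1 := expand (s 1%N); set E2 := expand (s 2%N).
have -> : NS s (NN (NN (NL 0) (NL 1)) (NL 2)) h = T3 E0 E1 E2 (fun a b c => h (NN (NN a b) c)) by [].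
have -> : NS s (NN (NL 0) (NN (NL 1) (NL 2))) h = T3 E0 E1 E2 (fun a b c => h (NN a (NN b c))) by [].
have -> : NS s (NN (NN (NL 1) (NL 0)) (NL 2)) h = T3 E0 E1 E2 (fun a b c => h (NN (NN b a) c)).
  exact: (P102 E0 E1 E2 (fun a b c => h (NN (NN b a) c))).
have -> : NS s (NN (NL 1) (NN (NL 0) (NL 2))) h = T3 E0 E1 E2 (fun a b c => h (NN b (NN a c))).
  exact: (P102 E0 E1 E2 (fun a b c => h (NN b (NN a c)))).
rewrite addr0 !T3_scale !T3_add; apply: T3_0 => a b c.
have K := congr1 (fun z : int => z%:~R : F) (gls_ok D a b c m).
rewrite /= !big_cons big_nil /= in K.
apply: etrans _ K; rewrite /h /psiF.
rewrite !rmorphD !rmorphM /=; ring.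
Qed.


Lemma Phi_A1 D m s : Phi D m (subst s (A1_id F)) = 0.
Proof.
rewrite /Phi subst_lin.
set h := fun w => psiF (wplug D w) m.
rewrite /A1_id /tx0 /tx1 /tx2 /= /sumL !big_cons big_nil /=.
set E0 := expand (s 0%N); set E1 := expand (s 1%N); set E2 := expand (s 2%N).
have -> : NS s (NN (NN (NL 0) (NL 1)) (NL 2)) h = T3 E0 E1 E2 (fun a b c => h (NN (NN a b) c)) by [].
have -> : NS s (NN (NN (NL 1) (NL 0)) (NL 2)) h = T3 E0 E1 E2 (fun a b c => h (NN (NN b a) c)).
  exact: (P102 E0 E1 E2 (fun a b c => h (NN (NN b a) c))).
have -> : NS s (NN (NN (NL 0) (NL 2)) (NL 1)) h = T3 E0 E1 E2 (fun a b c => h (NN (NN a c) b)).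
  exact: (P021 E0 E1 E2 (fun a b c => h (NN (NN a c) b))).
have -> : NS s (NN (NN (NL 2) (NL 0)) (NL 1)) h = T3 E0 E1 E2 (fun a b c => h (NN (NN c a) b)).
  exact: (P201 E0 E1 E2 (fun a b c => h (NN (NN c a) b))).
have -> : NS s (NN (NN (NL 1) (NL 2)) (NL 0)) h = T3 E0 E1 E2 (fun a b c => h (NN (NN b c) a)).
  exact: (P120 E0 E1 E2 (fun a b c => h (NN (NN b c) a))).
have -> : NS s (NN (NN (NL 2) (NL 1)) (NL 0)) h = T3 E0 E1 E2 (fun a b c => h (NN (NN c b) a)).
  exact: (P210 E0 E1 E2 (fun a b c => h (NN (NN c b) a))).
rewrite addr0 !T3_scale !T3_add; apply: T3_0 => a b c.
have K := congr1 (fun z : int => z%:~R : F) (gA1_ok D a b c m).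
rewrite /= !big_cons big_nil /= in K.
apply: etrans _ K; rewrite /h /psiF.
rewrite !rmorphD !rmorphM /=; ring.
Qed.


Lemma Phi_add D m a b : Phi D m (tadd a b) = Phi D m a + Phi D m b.
Proof. by rewrite /Phi /= sumL_cat. Qed.
Lemma Phi_scale D m c a : Phi D m (tscale c a) = c * Phi D m a.
Proof. by rewrite /Phi /= sumL_scale. Qed.
Lemma Phi_zero D m : Phi D m tzero = 0.
Proof. by rewrite /Phi /= sumL_nil. Qed.
Lemma Phi_mul1 D m a b : Phi D m (tmul a b) = sumL (expand a) (fun u => Phi (WRc u D) m b).
Proof. by rewrite /Phi /= sumL_mul. Qed.
Lemma Phi_mul2 D m a b : Phi D m (tmul a b) = sumL (expand b) (fun v => Phi (WLc D v) m a).
Proof. by rewrite /Phi /= sumL_mul sumL_swap. Qed.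

Lemma Phi_sound a0 b0 : teq (@LSA1 F) a0 b0 -> forall D m, Phi D m a0 = Phi D m b0.
Proof.
move=> H; induction H => D m.
- by [].
- by rewrite IHteq.
- by rewrite IHteq1 IHteq2.
- by rewrite !Phi_add IHteq1 IHteq2.
- by rewrite !Phi_scale IHteq.
- rewrite Phi_mul1 (eq_sumL _ (h2 := fun u => Phi (WRc u D) m b')); last by move=> u; rewrite IHteq2.
  rewrite -Phi_mul1 !Phi_mul2; apply: eq_sumL => v; exact: IHteq1.
- by rewrite !Phi_add addrA.
- by rewrite !Phi_add addrC.
- by rewrite Phi_add Phi_zero add0r.
- by rewrite Phi_add Phi_scale Phi_zero mulN1r subrr.
- by rewrite Phi_scale mul1r.
- by rewrite !Phi_scale mulrA.
- by rewrite !Phi_scale !Phi_add mulrDr !Phi_scale.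
- by rewrite Phi_add !Phi_scale mulrDl.
- rewrite Phi_add !Phi_mul2 -sumL_add; apply: eq_sumL => v.
  by rewrite Phi_add.
- rewrite Phi_add !Phi_mul1 -sumL_add; apply: eq_sumL => v.
  by rewrite Phi_add.
- rewrite Phi_scale !Phi_mul2 -sumL_scaler; apply: eq_sumL => v.
  by rewrite Phi_scale.
- rewrite Phi_scale !Phi_mul1 -sumL_scaler; apply: eq_sumL => v.
  by rewrite Phi_scale.
- case: H => ->; rewrite Phi_zero; [exact: Phi_ls | exact: Phi_A1].
Qed.


Lemma big_sumL_swap (s : seq nm) q (k : nm -> nm -> F) :
  \sum_(x <- s) sumL q (fun v => k x v) = sumL q (fun v => \sum_(x <- s) k x v).
Proof.
rewrite /sumL exchange_big /=; apply: eq_bigr => y _; by rewrite mulr_sumr.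
Qed.
Lemma big_allpairsNN (s t : seq nm) (h : nm -> F) :
  \sum_(u <- [seq NN x y | x <- s, y <- t]) h u = \sum_(x <- s) \sum_(y <- t) h (NN x y).
Proof. by rewrite big_flatten big_map; apply: eq_bigr => x _; rewrite big_map. Qed.
Lemma big_allpairsNN' (s t : seq nm) (h : nm -> F) :
  \sum_(u <- [seq NN y x | x <- s, y <- t]) h u = \sum_(x <- s) \sum_(y <- t) h (NN y x).
Proof. by rewrite big_flatten big_map; apply: eq_bigr => x _; rewrite big_map. Qed.

Lemma anti_lin t h :
  sumL (expand (anti_eval (@tvar F) t)) h = sumL (expand t) (fun w => \sum_(u <- AEi w) h u).
Proof.
elim: t h => [i||a IHa b IHb|c a IHa|a IHa b IHb] h /=.
- by rewrite /sumL !big_cons !big_nil !mul1r !addr0.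
- by rewrite !sumL_nil.
- by rewrite !sumL_cat IHa IHb.
- by rewrite !sumL_scale IHa.
- set EA := expand (anti_eval (@tvar F) a); set EB := expand (anti_eval (@tvar F) b).
  rewrite sumL_cat (sumL_mul EA) (sumL_mul EB) sumL_mul.
  have T1 : sumL EA (fun u => sumL EB (fun v => h (NN u v))) =
     sumL (expand a) (fun w => sumL (expand b) (fun w' =>
        \sum_(x <- AEi w) \sum_(y <- AEi w') h (NN x y))).
    rewrite IHa; apply: eq_sumL => w.
    under eq_bigr do rewrite IHb.
    by rewrite big_sumL_swap.
  have T2 : sumL EB (fun v => sumL EA (fun u => h (NN v u))) =
     sumL (expand a) (fun w => sumL (expand b) (fun w' =>
        \sum_(x <- AEi w) \sum_(y <- AEi w') h (NN y x))).
    rewrite IHb.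
    under eq_sumL => w' do under eq_bigr do rewrite IHa.
    under eq_sumL => w' do rewrite big_sumL_swap.
    rewrite sumL_swap; apply: eq_sumL => w; apply: eq_sumL => w'.
    by rewrite exchange_big.
  rewrite T1 T2 -sumL_add; apply: eq_sumL => w; rewrite -sumL_add; apply: eq_sumL => w'.
  by rewrite /= big_cat big_allpairsNN big_allpairsNN'.
Qed.

Lemma expand_size t x : x \in expand t -> (nsize x.2 <= tdeg t)%N.
Proof.
elim: t x => [i||a IHa b IHb|c a IHa|a IHa b IHb] x /=.
- by rewrite inE => /eqP -> /=.
- by [].
- rewrite mem_cat => /orP [/IHa|/IHb] H; rewrite (leq_trans H) // ?leq_maxl ?leq_maxr //.
- by case/mapP=> y /IHa H -> /=.
- case/allpairsP=> [[y z] [/= /IHa Hy /IHb Hz ->]] /=; exact: leq_add.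
Qed.

Lemma coef_zero (f : term) : (tdeg f <= 4)%N -> is_anti_identity_LSA1 f ->
  (24%:R : F) != 0 ->
  forall m, \sum_(x <- expand f) x.1 * (ceq x.2 m)%:R = 0.
Proof.
move=> Hd Ha H24 m.
have H := Phi_sound (Ha (@tvar F)) WH m.
rewrite Phi_zero /Phi anti_lin /sumL /= in H.
rewrite (eq_big_seq (fun x => x.1 * (24 * (ceq x.2 m)%:R))) in H; last first.
  move=> x /expand_size Hx; congr (_ * _).
  rewrite /psiF -rmorph_sum A_int; last exact: leq_trans Hx Hd.
  by rewrite rmorphM /=; case: (ceq x.2 m).
move: H; under eq_bigr do rewrite mulrCA.
rewrite -mulr_sumr => /eqP; rewrite mulf_eq0 (negbTE H24) /=.
by move/eqP.
Qed.

End Sem.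


Add Parametric Relation (F : fieldType) (S : Defs.term F -> Prop) : (Defs.term F) (teq S)
  reflexivity proved by (@teq_refl F S)
  symmetry proved by (@teq_sym F S)
  transitivity proved by (@teq_trans F S) as teq_rel.
Add Parametric Morphism (F : fieldType) (S : Defs.term F -> Prop) : (@tadd F)
  with signature (teq S) ==> (teq S) ==> (teq S) as tadd_mor.
Proof. by move=> *; apply: teq_add. Qed.
Add Parametric Morphism (F : fieldType) (S : Defs.term F -> Prop) c : (@tscale F c)
  with signature (teq S) ==> (teq S) as tscale_mor.
Proof. by move=> *; apply: teq_scale. Qed.
Add Parametric Morphism (F : fieldType) (S : Defs.term F -> Prop) : (@tmul F)
  with signature (teq S) ==> (teq S) ==> (teq S) as tmul_mor.
Proof. by move=> *; apply: teq_mul. Qed.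

Section TeqS.
Variable F : fieldType.
Variable S : Defs.term F -> Prop.
Local Notation term := (Defs.term F).
Local Notation "a == b" := (teq S a b) : type_scope.

Lemma t_addr0 a : tadd a tzero == a.
Proof. rewrite teq_addC teq_add0; reflexivity. Qed.
Lemma t_cancel x : x == tadd x x -> x == tzero.
Proof.
move=> H.
rewrite -(teq_addN S x) {2}H -teq_addA (teq_addN S x) t_addr0. reflexivity.
Qed.
Lemma t_scale0 a : tscale 0 a == tzero.
Proof. apply: t_cancel; have := teq_scaleDl S 0 0 a; rewrite addr0; exact. Qed.
Lemma t_scalez c : tscale c tzero == tzero.
Proof.
apply: t_cancel; rewrite -teq_scaleDr; apply: teq_scale; symmetry; exact: teq_add0.
Qed.
Lemma t_mul0l b : tmul tzero b == tzero.
Proof.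
apply: t_cancel; rewrite -teq_mulDl; apply: teq_mul; [symmetry; exact: teq_add0|reflexivity].
Qed.
Lemma t_mul0r b : tmul b tzero == tzero.
Proof.
apply: t_cancel; rewrite -teq_mulDr; apply: teq_mul; [reflexivity|symmetry; exact: teq_add0].
Qed.

Definition emb (p : seq (F * nm)) : term :=
  foldr (fun x acc => tadd (tscale x.1 (tm F x.2)) acc) tzero p.

Lemma emb_cat p q : emb (p ++ q) == tadd (emb p) (emb q).
Proof.
elim: p => [|x p IH] /=; first by rewrite teq_add0; reflexivity.
by rewrite IH teq_addA; reflexivity.
Qed.
Lemma emb_scale c p : emb [seq (c * x.1, x.2) | x <- p] == tscale c (emb p).
Proof.
elim: p => [|x p IH] /=; first by rewrite t_scalez; reflexivity.
by rewrite IH teq_scaleDr teq_scaleA; reflexivity.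
Qed.
Lemma emb_mul1 x q : emb [seq (x.1 * y.1, NN x.2 y.2) | y <- q] ==
  tmul (tscale x.1 (tm F x.2)) (emb q).
Proof.
elim: q => [|y q IH] /=; first by rewrite t_mul0r; reflexivity.
rewrite IH teq_mulDr teq_mulZl teq_mulZr teq_scaleA; reflexivity.
Qed.
Lemma emb_mul p q : emb [seq (x.1 * y.1, NN x.2 y.2) | x <- p, y <- q] ==
  tmul (emb p) (emb q).
Proof.
elim: p => [|x p IH] /=; first by rewrite t_mul0l; reflexivity.
by rewrite emb_cat emb_mul1 IH teq_mulDl; reflexivity.
Qed.
Lemma expand_emb t : t == emb (expand t).
Proof.
elim: t => [i||a IHa b IHb|c a IHa|a IHa b IHb] /=.
- by rewrite t_addr0 teq_scale1; reflexivity.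
- reflexivity.
- by rewrite emb_cat -IHa -IHb; reflexivity.
- by rewrite emb_scale -IHa; reflexivity.
- by rewrite emb_mul -IHa -IHb; reflexivity.
Qed.

Lemma emb_filter (P : pred (F * nm)) p :
  emb p == tadd (emb [seq x <- p | P x]) (emb [seq x <- p | ~~ P x]).
Proof.
elim: p => [|x p IH] /=; first by rewrite teq_add0; reflexivity.
case: (P x) => /=; rewrite IH.
  rewrite teq_addA; reflexivity.
rewrite teq_addA (teq_addC S (tscale _ _) (emb _)) -teq_addA; reflexivity.
Qed.

End TeqS.

Section Comm.
Variable F : fieldType.
Local Notation term := (Defs.term F).
Local Notation S := (@comm_ids F).
Local Notation "a == b" := (teq S a b) : type_scope.

Lemma comm_swap a b : tmul a b == tmul b a.
Proof.
have H := @teq_id F S _ (fun i => if i == 0%N then a else b) (erefl _).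
rewrite /= in H.
transitivity (tadd (tadd (tmul a b) (tscale (-1) (tmul b a))) (tmul b a)).
  rewrite -teq_addA (teq_addC S (tscale _ _) _) teq_addN t_addr0; reflexivity.
rewrite H teq_add0; reflexivity.
Qed.

Lemma ceq_teq u v : ceq u v -> tm F u == tm F v.
Proof.
elim: u v => [i|a1 IH1 a2 IH2] [j|b1 b2] //=.
  by move/eqP->; reflexivity.
case/orP=> /andP [h1 h2].
  by rewrite (IH1 _ h1) (IH2 _ h2); reflexivity.
by rewrite (IH1 _ h1) (IH2 _ h2) comm_swap; reflexivity.
Qed.

Definition coefF (p : seq (F * nm)) (m : nm) := \sum_(x <- p) x.1 * (ceq x.2 m)%:R.

Lemma emb_class w0 q :
  emb [seq x <- q | ceq x.2 w0] == tscale (coefF q w0) (tm F w0).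
Proof.
elim: q => [|y q IH] /=; first by rewrite /coefF big_nil t_scale0; reflexivity.
rewrite /coefF big_cons -/(coefF q w0).
case E: (ceq y.2 w0) => /=.
  by rewrite IH (ceq_teq E) mulr1 teq_scaleDl; reflexivity.
by rewrite IH mulr0 add0r; reflexivity.
Qed.

Lemma group_zero n p : (size p <= n)%N -> (forall m, coefF p m = 0) -> emb p == tzero.
Proof.
elim: n p => [|n IH] [|x0 p] Hs Hz; try reflexivity.
  by move: Hs; rewrite /= ltn0.
set w0 := x0.2.
rewrite (emb_filter S (fun x => ceq x.2 w0) (x0 :: p)).
rewrite emb_class (Hz w0) t_scale0 teq_add0.
apply: IH.
  by rewrite /= /w0 ceq_refl /= size_filter (leq_trans (count_size _ _)).
move=> m; rewrite /coefF big_filter.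
case Hm: (ceq w0 m).
  rewrite big1 // => x /negbTE E1; case E2: (ceq x.2 m); rewrite ?mulr0 //.
  by move: E1; rewrite (@ceq_trans m) // ceq_sym.
have := Hz m; rewrite /coefF (bigID (fun x => ceq x.2 w0)) /= big1 ?add0r //.
move=> x E1; case E2: (ceq x.2 m); rewrite ?mulr0 //.
by move: Hm; rewrite (@ceq_trans x.2) // ceq_sym.
Qed.

End Comm.

Theorem mainTheorem7 (F : fieldType) (charF0 : [pchar F] =i pred0)
  (f : term F) :
  (tdeg f <= 4)%N -> is_anti_identity_LSA1 f -> consequence_of_comm f.
Proof.
move=> Hd Ha.
have H24 : (24%:R : F) != 0 by rewrite (proj1 (pcharf0P F) charF0 24).
have Hc := coef_zero Hd Ha H24.
rewrite /consequence_of_comm.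
rewrite (expand_emb (@comm_ids F) f).
exact: (@group_zero F (size (expand f))).
Qed.
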